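(* For each $D=DC_i^{\pm}(n,q)$ with $N=|D|$ and a fixed ordering $g_1,\dots,g_N$ of $D$, the $\mathbb F_3$-linear map $\mathbb F_q\to\mathbb F_3^N$, $a\mapsto c(a)=(\mathrm{tr}(a\,\mathrm{Tr}\,g_1),\dots,\mathrm{tr}(a\,\mathrm{Tr}\,g_N))$, is injective (hence an $\mathbb F_3$-linear isomorphism of $\mathbb F_q$ onto $C(D)^\perp=\{c(a):a\in\mathbb F_q\}$) in each of the following cases, for all $q$: (1) $i=1,2,3$, sign $+$, $n\ge2$ even; (2) $i=4$, sign $+$, $n\ge4$ even; (3) $i=1$, sign $-$, $n\ge1$ odd; (4) $i=2,3,4$, sign $-$, $n\ge3$ odd.
   Context: $q=3^s$, $\mathrm{tr}:\mathbb F_q\to\mathbb F_3$ the absolute trace, $\mathrm{Tr}$ the matrix trace. Fix a nonsquare $\epsilon\in\mathbb F_q^*$, $\delta_\epsilon=\mathrm{diag}(1,-\epsilon)$, $J=\begin{bmatrix}0&1_{n-1}&0\\1_{n-1}&0&0\\0&0&\delta_\epsilon\end{bmatrix}$, $O^-(2n,q)=\{w\in GL(2n,q):{}^twJw=J\}$, $SO^-$ its determinant-one subgroup. $Q=Q(2n,q)$: products $\begin{bmatrix}A&0&0\\0&{}^tA^{-1}&0\\0&0&i\end{bmatrix}\begin{bmatrix}1_{n-1}&B&-{}^th\delta_\epsilon\\0&1_{n-1}&0\\0&h&1_2\end{bmatrix}$, $A\in GL(n-1,q)$, $i\in SO^-(2,q)$, ${}^tB+B+{}^th\delta_\epsilon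 h=0$. $\rho=\mathrm{diag}(1_{n-1},1_{n-1},1,-1)$, $\sigma_r=\begin{bmatrix}0&0&1_r&0&0\\0&1_{n-1-r}&0&0&0\\1_r&0&0&0&0\\0&0&0&1_{n-1-r}&0\\0&0&0&0&1_2\end{bmatrix}$. $DC_1^{\pm}=Q\sigma_{n-1}Q$, $DC_2^{\pm}=Q\sigma_{n-2}Q$, $DC_3^{\pm}=\rho Q\sigma_{n-2}Q$, $DC_4^{\pm}=\rho Q\sigma_{n-3}Q$, with sign $+$ for $n$ even and $-$ for $n$ odd; $Q\sigma Q=\{x\sigma y\}$, $\rho Q\sigma Q=\{\rho x\sigma y\}$, $x,y\in Q$. The ternary code is $C(D)=\{u\in\mathbb F_3^N:\sum_j u_j\,\mathrm{Tr}(g_j)=0\text{ in }\mathbb F_q\}$ and $C(D)^\perp$ its dual in $\mathbb F_3^N$ under the standard inner product. *)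

(* Defs.v *)
From HB Require Import structures.
From mathcomp Require Import all_boot all_order all_algebra all_field.
Unset Printing Implicit Defensive.
Import GRing.Theory.
Local Open Scope ring_scope.

Section OrthCode.
Variable F : finFieldType.

(* absolute trace F_q -> F_3 (values in the prime subfield of F), q = 3^s *)
Definition abstr (x : F) : F := \sum_(k < logn 3 #|F|) x ^+ (3 ^ k).

(* matrices of size 2n = (n-1) + (n-1) + 2 *)
Notation mdim n := (n.-1 + n.-1 + 2)%N.

Definition blk3 m (X11 : 'M[F]_(m, m)) (X12 : 'M[F]_(m, m)) (X13 : 'M[F]_(m, 2))
  (X21 : 'M[F]_(m, m)) (X22 : 'M[F]_(m, m)) (X23 : 'M[F]_(m, 2))
  (X31 : 'M[F]_(2, m)) (X32 : 'M[F]_(2, m)) (X33 : 'M[F]_2) : 'M[F]_(m + m + 2) :=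
  block_mx (block_mx X11 X12 X21 X22) (col_mx X13 X23) (row_mx X31 X32) X33.

Definition delta (eps : F) : 'M[F]_2 :=
  \matrix_(i < 2, j < 2) (if i == j then (if val i == 0%N then 1 else - eps) else 0).

Definition Jmat (eps : F) n : 'M[F]_(mdim n) :=
  blk3 n.-1 0 1%:M 0 1%:M 0 0 0 0 (delta eps).

Definition Ominus (eps : F) n (w : 'M[F]_(mdim n)) : bool :=
  (w \in unitmx) && (w^T *m Jmat eps n *m w == Jmat eps n).
Definition SOminus (eps : F) n (w : 'M[F]_(mdim n)) : bool :=
  Ominus eps n w && (\det w == 1).

Definition SO2minus (eps : F) (i : 'M[F]_2) : bool :=
  (i \in unitmx) && (i^T *m delta eps *m i == delta eps) && (\det i == 1).

(* the parabolic subgroup Q(2n,q) *)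
Definition Qset (eps : F) n : {set 'M[F]_(mdim n)} :=
  [set x | [exists A : 'M[F]_(n.-1), [exists B : 'M[F]_(n.-1),
     [exists h : 'M[F]_(2, n.-1), [exists i : 'M[F]_2,
       [&& A \in unitmx, SO2minus eps i,
           B^T + B + h^T *m delta eps *m h == 0 &
           x == blk3 n.-1 A 0 0 0 (invmx A)^T 0 0 0 i
                *m blk3 n.-1 1%:M B (- (h^T *m delta eps)) 0 1%:M 0 0 h 1%:M]]]]]].

Definition rho n : 'M[F]_(mdim n) :=
  \matrix_(i, j) (if i == j then (if val i == (n.-1 + n.-1 + 1)%N then -1 else 1)
                  else 0).

Definition swapidx (m r k : nat) : nat :=
  if (k < r)%N then (k + m)%N
  else if (m <= k)%N && (k < m + r)%N then (k - m)%N else k.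

Definition sigma n (r : nat) : 'M[F]_(mdim n) :=
  \matrix_(i, j) ((val i == swapidx n.-1 r (val j)) %:R).

Definition QsQ eps n (s : 'M[F]_(mdim n)) : {set 'M[F]_(mdim n)} :=
  [set g | [exists x, [exists y,
     [&& x \in Qset eps n, y \in Qset eps n & g == x *m s *m y]]]].
Definition rQsQ eps n (s : 'M[F]_(mdim n)) : {set 'M[F]_(mdim n)} :=
  [set g | [exists x, [exists y,
     [&& x \in Qset eps n, y \in Qset eps n & g == rho n *m x *m s *m y]]]].

(* DC_i^{\pm}(n,q), i = 1..4 (sign determined by parity of n) *)
Definition DC eps n (i : nat) : {set 'M[F]_(mdim n)} :=
  match i with
  | 1 => QsQ eps n (sigma n n.-1)
  | 2 => QsQ eps n (sigma n (n.-1).-1)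
  | 3 => rQsQ eps n (sigma n (n.-1).-1)
  | _ => rQsQ eps n (sigma n ((n.-1).-1).-1)
  end.

Definition codeword eps n i (a : F) : seq F :=
  [seq abstr (a * \tr g) | g <- enum (DC eps n i)].

End OrthCode.

Arguments abstr {F}.
Arguments blk3 {F m}.
Arguments delta {F}.
Arguments Jmat {F}.
Arguments Ominus {F}.
Arguments SOminus {F}.
Arguments SO2minus {F}.
Arguments Qset {F}.
Arguments rho {F}.
Arguments swapidx : clear implicits.
Arguments sigma {F}.
Arguments QsQ {F}.
Arguments rQsQ {F}.
Arguments DC {F}.
Arguments codeword {F}.

(* Main.v *)
Require Import Defs.
From HB Require Import structures.
From mathcomp Require Import all_boot all_order all_algebra all_field.
From mathcomp Require Import abelian pgroup.
From Stdlib Require Import Lia.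
Import GRing.Theory.
Local Open Scope ring_scope.

Section Arith.
Variable F : finFieldType.
Hypothesis pchar3 : (3%N \in [pchar F])%R.
Local Notation s := (logn 3 #|F|).

Lemma cardF : #|F| = (3 ^ s)%N.
Proof.
have /abelem_pgroup H := fin_ring_pchar_abelem pchar3.
have := @card_pgroup _ 3 (fingroup.setT_group _) H; by rewrite cardsT.
Qed.

Lemma s_gt0 : (0 < s)%N.
Proof.
rewrite lt0n; apply/eqP => e; move: (finNzRing_gt1 F); by rewrite cardF e.
Qed.

Lemma cardF3 : #|F| = (3 * 3 ^ s.-1)%N.
Proof. by rewrite -expnS prednK ?s_gt0 // -cardF. Qed.

Lemma abstrD (x y : F) : abstr (x + y) = abstr x + abstr y.
Proof.
rewrite /abstr -big_split /=; apply: eq_bigr => k _.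
apply: exprDn_pchar; by rewrite pnatX pnatE // pchar3.
Qed.

Lemma abstrN (x : F) : abstr (- x) = - abstr x.
Proof.
apply/eqP; rewrite -subr_eq0 opprK -abstrD addNr /abstr.
by rewrite big1 // => k _; rewrite expr0n expn_eq0.
Qed.

Definition trp (c : F) : {poly F} := \sum_(k < s) (c ^+ (3 ^ k)) *: 'X^(3 ^ k).

Lemma trpE c x : (trp c).[x] = abstr (c * x).
Proof.
rewrite /trp horner_sum /abstr; apply: eq_bigr => k _.
by rewrite hornerZ hornerXn exprMn.
Qed.

Lemma roots_bound (c K : F) (S : {set F}) : c != 0 ->
  {in S, forall x, abstr (c * x) = K} -> (#|S| <= 3 ^ s.-1)%N.
Proof.
move=> c0 HS.
pose P := trp c - K%:P.
have P0 : P != 0.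
  have hs : (s.-1 < s)%N by rewrite ltn_predL s_gt0.
  apply/eqP => /(congr1 (fun p : {poly F} => p`_(3 ^ s.-1))).
  rewrite coef0 coefB coefC expn_eq0 /= subr0 /trp coef_sum.
  rewrite (bigD1 (Ordinal hs)) //= coefZ coefXn eqxx mulr1.
  rewrite big1 ?addr0; first by apply/eqP; rewrite expf_neq0.
  move=> k /eqP Hk; rewrite coefZ coefXn eqn_exp2l //.
  case: eqP => [e|]; last by rewrite mulr0.
  by case: Hk; apply: val_inj.
have szP : (size P <= (3 ^ s.-1).+1)%N.
  rewrite /P (leq_trans (size_add _ _)) // geq_max; apply/andP; split.
    rewrite /trp (leq_trans (size_sum _ _ _)) //.
    apply/bigmax_leqP => k _.
    rewrite (leq_trans (size_scale_leq _ _)) // size_polyXn ltnS leq_exp2l //.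
    by rewrite -ltnS prednK ?s_gt0.
  by rewrite size_polyN (leq_trans (size_polyC_leq1 _)).
have := max_poly_roots P0 (rs := enum S).
rewrite enum_uniq cardE => H; rewrite -ltnS; apply: (leq_trans _ szP); apply: H => //.
apply/allP => x; rewrite mem_enum => xS.
by rewrite /root /P hornerD hornerN hornerC trpE HS // subrr.
Qed.


Lemma three0 : (3%:R : F) = 0.
Proof. exact: pcharf0 pchar3. Qed.

Lemma two_nz : (2%:R : F) != 0.
Proof.
apply/eqP => h; have := three0; rewrite (_ : 3 = 2 + 1)%N // natrD h add0r.
by move/eqP; rewrite oner_eq0.
Qed.

Lemma fiber2 (f g : F -> F) (A : {set F}) :
  (forall x y, x \in A -> y \in A -> f x = f y -> y = x \/ y = g x) ->
  (#|A| <= 2 * #|f @: A|)%N.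
Proof.
move=> Hf.
rewrite -sum1_card (partition_big_imset f) /= mulnC -sum_nat_const.
apply: leq_sum => j /imsetP [x0 x0A ->].
rewrite sum1_card.
apply: (@leq_trans #|[set x0; g x0]|); last by rewrite cards2; case: (_ != _).
apply: subset_leq_card; apply/subsetP => y; rewrite inE => /andP [yA /eqP e].
by rewrite !inE; case: (Hf x0 y x0A yA (esym e)) => ->; rewrite eqxx ?orbT.
Qed.

Lemma contraA (c K : F) (A : {set F}) (f : F -> F) : c != 0 ->
  (forall t, t \in A -> abstr (c * (K + f t)) = 0) ->
  (#|f @: A| <= 3 ^ s.-1)%N.
Proof.
move=> c0 H; apply: (@roots_bound c (- abstr (c * K)) (f @: A) c0).
move=> y /imsetP [t tA ->]; apply/eqP; rewrite -subr_eq0 opprK addrC.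
by rewrite -abstrD -mulrDr H.
Qed.

Lemma sq_diff (x : F) : x = (x + 1) ^+ 2 - (x - 1) ^+ 2.
Proof.
rewrite subr_sqr opprB [x + 1 + (1 - x)]addrC addrA subrK.
rewrite [x + 1 + (x - 1)]addrA [x + 1 + x]addrAC addrK.
rewrite -!mulr2n mulrnAl mul1r -mulrnA -mulr_natr (_ : (2 * 2 = 3 + 1)%N) //.
by rewrite natrD three0 add0r mulr1.
Qed.

Lemma absurdI (c K : F) : c != 0 ->
  (forall t, abstr (c * (K + t ^+ 2)) = 0) -> False.
Proof.
move=> c0 H.
have H0 : abstr (c * K) = 0 by have := H 0; rewrite expr0n /= addr0.
have H1 t : abstr (c * t ^+ 2) = 0.
  by have := H t; rewrite mulrDr abstrD H0 add0r.
have := @roots_bound c 0 [set: F] c0.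
rewrite cardsT {1}cardF leqNgt ltn_exp2l // ltn_predL s_gt0 /=.
move=> H2; suff : false by []; apply: H2 => x _; rewrite (sq_diff x) mulrBr abstrD abstrN !H1 subrr //.
Qed.


Variable eps : F.
Hypothesis eps_nsq : ~~ [exists y : F, y ^+ 2 == eps].

Lemma den_nz t : 1 - eps * t ^+ 2 != 0.
Proof.
apply/negP => /eqP h; move/negP: eps_nsq; apply; apply/existsP.
have t0 : t != 0 by apply/eqP => t0; move: h; rewrite t0 expr0n mulr0 subr0 => /eqP; rewrite oner_eq0.
exists t^-1; rewrite exprVn; apply/eqP.
have : eps * t ^+ 2 = 1 by apply/eqP; rewrite eq_sym -subr_eq0 h.
by move/(congr1 (fun z => z / t ^+ 2)); rewrite mulfK ?expf_neq0 // div1r => <-.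
Qed.

Definition aS t := (1 + eps * t ^+ 2) / (1 - eps * t ^+ 2).

Lemma aS_inj x y : aS x = aS y -> y = x \/ y = - x.
Proof.
rewrite /aS => /eqP; rewrite eqr_div ?den_nz // => /eqP.
set u := eps * x ^+ 2; set v := eps * y ^+ 2.
rewrite !mulrDl !mulrDr !mul1r !mulr1 !mulrN [v * u]mulrC !addrA => /addIr.
rewrite -!addrA => /addrI /eqP; rewrite addrC -subr_eq0 opprD opprK addrA.
rewrite -addrA -mulr2n -mulr_natr mulf_eq0 (negbTE two_nz) orbF.
rewrite subr_eq0 /u /v => /eqP e.
have eps0 : eps != 0.
  apply/eqP => e0; move/negP: eps_nsq; apply; apply/existsP; exists 0.
  by rewrite e0 expr0n.
move/mulfI: e => /(_ eps0) /eqP; rewrite -subr_eq0 subr_sqr mulf_eq0.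
by rewrite subr_eq0 addr_eq0 => /orP [] /eqP ->; [left|right; rewrite opprK].
Qed.

Lemma absurdS (c K : F) : c != 0 ->
  (forall t, abstr (c * (K + (aS t + aS t))) = 0) -> False.
Proof.
move=> c0 H.
have h1 := @contraA c K [set: F] (fun t => aS t + aS t) c0 (fun t _ => H t).
have h2 := @fiber2 (fun t => aS t + aS t) (fun t => - t) [set: F].
have : (#|[set: F]| <= 2 * 3 ^ s.-1)%N.
  apply: leq_trans (h2 _) _; last first.
    rewrite leq_pmul2l //.
  have e2 z : z + z = z * 2%:R by rewrite mulr_natr mulr2n.
  move=> x y _ _ /eqP; rewrite !e2 (inj_eq (mulIf two_nz)).
  by move/eqP/aS_inj.
by rewrite cardsT {1}cardF3 leq_mul2r expn_eq0.
Qed.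

Lemma inv_fib (x y : F) : x != 0 -> y != 0 -> x + x^-1 = y + y^-1 -> y = x \/ y = x^-1.
Proof.
move=> x0 y0 e.
have : (x - y) * (1 - (x * y)^-1) = 0.
  rewrite mulrBr mulr1 invfM mulrBl mulrA mulfV // mul1r.
  by rewrite mulrCA mulfV // mulr1 opprB addrACA -opprD e subrr.
move/eqP; rewrite mulf_eq0 subr_eq0 subr_eq0 => /orP [/eqP -> | /eqP h]; first by left.
right; have : x * y != 0 by rewrite mulf_neq0.
move=> xy0; apply: (mulfI x0); rewrite mulfV //.
by rewrite -[x * y]invrK -h invr1.
Qed.

Lemma absurdR (c K : F) : c != 0 ->
  (forall t, t != 0 -> abstr (c * (K + (t + t^-1))) = 0) -> False.
Proof.
move=> c0 H.
pose A := [set~ (0 : F)].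
have HA t : t \in A -> abstr (c * (K + (t + t^-1))) = 0.
  by move=> tA; apply: H; move: tA; rewrite in_setC1.
have h1 := @contraA c K A (fun t => t + t^-1) c0 HA.
have h2 := @fiber2 (fun t => t + t^-1) (fun t => t^-1) A.
have h3 : (2 <= #|[set (t + t^-1)%R | t in A]|)%N.
  apply: (@leq_trans #|[set (2%:R : F); - 2%:R]|).
    rewrite cards2; case: eqP => // e.
    have : (2%:R : F) + 2%:R = 0 by rewrite {1}e addNr.
    rewrite -natrD (_ : (2 + 2 = 3 + 1)%N) // natrD three0 add0r => /eqP.
    by rewrite oner_eq0.
  apply: subset_leq_card; apply/subsetP => z; rewrite !inE => /orP [] /eqP ->.
    by apply/imsetP; exists 1; rewrite ?in_setC1 ?oner_eq0 // invr1 -natr1 addrC.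
  apply/imsetP; exists (-1); rewrite ?in_setC1 ?oppr_eq0 ?oner_eq0 //.
  by rewrite invrN invr1 -opprD -natr1 addrC.
have h4 : (#|A| <= 2 * #|[set (t + t^-1)%R | t in A]|)%N.
  apply: h2 => x y; rewrite !in_setC1 => x0 y0; exact: inv_fib.
move: h4; rewrite cardsC1 cardF3.
move: h1 h3; move: (#|_|) (3 ^ _)%N => S p.
move=> /leP h1 /leP h3 /leP h4; move: h4; rewrite -?multE -?minusE -?plusE.
lia.
Qed.

End Arith.


Section Mat.
Variable F : finFieldType.
Variable n : nat.
Local Notation m := n.-1.

Lemma swap_lt r k : (r <= m)%N -> (k < m + m + 2)%N -> (swapidx m r k < m + m + 2)%N.
Proof.
move=> hr hk; rewrite /swapidx; case: ifP => h1.
  by rewrite (leq_trans _ (leq_addr 2 _)) // ltn_add2r (leq_trans h1).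
case: ifP => // /andP [h2 h3]; exact: leq_ltn_trans (leq_subr _ _) hk.
Qed.

Definition sw r (hr : (r <= m)%N) (k : 'I_(m + m + 2)) : 'I_(m + m + 2) :=
  Ordinal (@swap_lt r k hr (ltn_ord k)).
Arguments sw {r}.

Lemma mul_sigmaE r (hr : (r <= m)%N) (M : 'M[F]_(m + m + 2)) k :
  (M *m sigma n r) k k = M k (sw hr k).
Proof.
rewrite mxE (bigD1 (sw hr k)) //= mxE eqxx mulr1 big1 ?addr0 // => j hj.
rewrite mxE; case: eqP => [e|]; last by rewrite mulr0.
by case/eqP: hj; apply: val_inj.
Qed.

Lemma tr_blk3_sigma r (hr : (r <= m)%N) X11 X12 X13 X21 X22 X23 X31 X32 (X33 : 'M[F]_2) :
  \tr (blk3 X11 X12 X13 X21 X22 X23 X31 X32 X33 *m sigma n r) =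
  \sum_(j < m) (if (j < r)%N then X12 j j else X11 j j) +
  \sum_(j < m) (if (j < r)%N then X21 j j else X22 j j) + \tr X33.
Proof.
rewrite /mxtrace big_split_ord big_split_ord /=.
congr (_ + _ + _).
- apply: eq_bigr => j _; rewrite mul_sigmaE.
  case: ifP => hj.
    have -> : sw hr (lshift 2 (lshift m j)) = lshift 2 (rshift m j).
      by apply: val_inj; rewrite /= /swapidx hj addnC.
    by rewrite /blk3 block_mxEul block_mxEur.
  have -> : sw hr (lshift 2 (lshift m j)) = lshift 2 (lshift m j).
    apply: val_inj; rewrite /= /swapidx hj.
    by rewrite (leqNgt m j) (ltn_ord j).
  by rewrite /blk3 block_mxEul block_mxEul.
- apply: eq_bigr => j _; rewrite mul_sigmaE.
  have nlt : (m + j < r)%N = false.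
    by apply/negbTE; rewrite -leqNgt (leq_trans hr) // leq_addr.
  case: ifP => hj.
    have -> : sw hr (lshift 2 (rshift m j)) = lshift 2 (lshift m j).
      by apply: val_inj; rewrite /= /swapidx nlt leq_addr ltn_add2l hj /= addKn.
    by rewrite /blk3 block_mxEul block_mxEdl.
  have -> : sw hr (lshift 2 (rshift m j)) = lshift 2 (rshift m j).
    by apply: val_inj; rewrite /= /swapidx nlt ltn_add2l hj andbF.
  by rewrite /blk3 block_mxEul block_mxEdr.
- apply: eq_bigr => j _; rewrite mul_sigmaE.
  have -> : sw hr (rshift (m + m) j) = rshift (m + m) j.
    apply: val_inj; rewrite /= /swapidx.
    have -> : (m + m + j < r)%N = false.
      by apply/negbTE; rewrite -leqNgt (leq_trans hr) // -addnA leq_addr.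
    have -> : (m + m + j < m + r)%N = false.
      by apply/negbTE; rewrite -leqNgt -addnA leq_add2l (leq_trans hr) // leq_addr.
    by rewrite andbF.
  by rewrite /blk3 block_mxEdr.
Qed.


Lemma sw_r r (hr : (r <= m)%N) j : sw hr (rshift (m + m) j) = rshift (m + m) j.
Proof.
apply: val_inj; rewrite /= /swapidx.
have -> : (m + m + j < r)%N = false.
  by apply/negbTE; rewrite -leqNgt (leq_trans hr) // -addnA leq_addr.
have -> : (m + m + j < m + r)%N = false.
  by apply/negbTE; rewrite -leqNgt -addnA leq_add2l (leq_trans hr) // leq_addr.
by rewrite andbF.
Qed.

Definition lst : 'I_(m + m + 2) := rshift (m + m) 1.

Lemma tr_rho (N : 'M[F]_(m + m + 2)) : \tr (rho n *m N) = \tr N - N lst lst *+ 2.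
Proof.
rewrite /mxtrace (bigD1 lst) //= [in RHS](bigD1 lst) //=.
have E k : (rho n *m N) k k = (if val k == (m + m + 1)%N then - N k k else N k k).
  rewrite mxE (bigD1 k) //= big1 ?addr0 => [|j hj]; last first.
    by rewrite mxE eq_sym (negbTE hj) mul0r.
  by rewrite mxE eqxx; case: ifP; rewrite ?mulN1r ?mul1r.
rewrite E /= eqxx.
rewrite (eq_bigr (fun k => N k k)) => [|k hk]; last first.
  rewrite E; case: ifP => // /eqP e; case/eqP: hk; apply: val_inj.
  by rewrite /= e addn1.
by rewrite addrAC mulr2n opprD addrA subrr add0r.
Qed.

Lemma blk3_sigma_lst r (hr : (r <= m)%N) X11 X12 X13 X21 X22 X23 X31 X32 (X33 : 'M[F]_2) :
  (blk3 X11 X12 X13 X21 X22 X23 X31 X32 X33 *m sigma n r) lst lst = X33 1 1.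
Proof. by rewrite mul_sigmaE /lst sw_r /blk3 block_mxEdr. Qed.

End Mat.

Section Mat2.
Variable F : finFieldType.

Lemma det2 (M : 'M[F]_2) : \det M = M 0 0 * M 1 1 - M 0 1 * M 1 0.
Proof.
rewrite (expand_det_row M 0) big_ord_recl big_ord1 /cofactor !det_mx11 !mxE /=.
have -> : lift (0 : 'I_2) (0 : 'I_1) = 1 by apply: val_inj.
have -> : lift (1 : 'I_2) (0 : 'I_1) = 0 by apply: val_inj.
by rewrite expr0 expr1 mul1r mulN1r mulrN.
Qed.


Lemma mul22E (M N : 'M[F]_2) i j : (M *m N) i j = M i 0 * N 0 j + M i 1 * N 1 j.
Proof.
rewrite mxE big_ord_recl big_ord1.
by have -> : lift ord0 (ord0 : 'I_1) = 1 :> 'I_2 by apply: val_inj.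
Qed.

Lemma ord2P (i : 'I_2) : i = 0 \/ i = 1.
Proof. by case: i => [[|[|//]] Hi]; [left|right]; apply: val_inj. Qed.

Lemma mul2E p q (M : 'M[F]_(p, 2)) (N : 'M[F]_(2, q)) i j :
  (M *m N) i j = M i 0 * N 0 j + M i 1 * N 1 j.
Proof.
rewrite mxE big_ord_recl big_ord1.
by have -> : lift ord0 (ord0 : 'I_1) = 1 :> 'I_2 by apply: val_inj.
Qed.

Variable eps : F.

Definition iS (a b : F) : 'M[F]_2 := \matrix_(i < 2, j < 2)
  (if val i == 0%N then (if val j == 0%N then a else eps * b)
   else (if val j == 0%N then b else a)).

Lemma iS_SO2 a b : a ^+ 2 - eps * b ^+ 2 = 1 -> SO2minus eps (iS a b).
Proof.
move=> hab.
have dt : \det (iS a b) = 1.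
  by rewrite det2 !mxE /=; rewrite !expr2 mulrA in hab.
rewrite /SO2minus unitmxE dt unitr1 eqxx andbT /=.
apply/eqP/matrixP => i j.
case: (ord2P i) => ->; case: (ord2P j) => ->; rewrite !mul22E !mxE /=;
  rewrite !mulr1 !mulr0 !addr0 !add0r !mulrN !mulNr.
- by rewrite -hab !expr2 [b * eps]mulrC mulrA.
- by apply/eqP; rewrite subr_eq0 [a * _]mulrC [b * eps]mulrC.
- by apply/eqP; rewrite subr_eq0 [a * eps]mulrC mulrAC.
- rewrite -[RHS]mulr1 -hab mulNr mulrBr opprB addrC.
  rewrite [RHS]addrC; congr (- _ + _).
    by rewrite [a * eps]mulrC -mulrA -expr2.
  by rewrite -mulrA [b * (eps * b)]mulrCA expr2.
Qed.

End Mat2.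

Section QS.
Variable F : finFieldType.
Variable eps : F.
Variable n : nat.
Local Notation m := n.-1.

Lemma blk3_1 : blk3 (m := m) 1%:M 0 0 0 1%:M 0 0 0 (1%:M : 'M[F]_2) = 1%:M.
Proof. by rewrite /blk3 col_mx0 row_mx0 -!scalar_mx_block. Qed.

Lemma SO2_1 : SO2minus eps 1%:M.
Proof. by rewrite /SO2minus unitmx1 trmx1 mul1mx mulmx1 det1 !eqxx. Qed.

Lemma Q_D (A : 'M[F]_m) i : A \in unitmx -> SO2minus eps i ->
  blk3 A 0 0 0 (invmx A)^T 0 0 0 i \in Qset eps n.
Proof.
move=> uA si; rewrite inE; apply/existsP; exists A; apply/existsP; exists 0.
apply/existsP; exists 0; apply/existsP; exists i.
rewrite uA si /= !trmx0 mulmx0 !addr0 eqxx /= mul0mx oppr0 blk3_1 mulmx1 //.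
Qed.

Lemma Q_U (B : 'M[F]_m) h : B^T + B + h^T *m delta eps *m h == 0 ->
  blk3 1%:M B (- (h^T *m delta eps)) 0 1%:M 0 0 h 1%:M \in Qset eps n.
Proof.
move=> hB; rewrite inE; apply/existsP; exists 1%:M; apply/existsP; exists B.
apply/existsP; exists h; apply/existsP; exists 1%:M.
by rewrite unitmx1 SO2_1 hB invmx1 trmx1 blk3_1 mul1mx eqxx.
Qed.

Lemma Q_1 : 1%:M \in Qset eps n.
Proof.
have := @Q_U 0 0; rewrite !trmx0 mulmx0 !addr0 eqxx mul0mx oppr0 blk3_1.
by apply.
Qed.

End QS.

Section Main.
Variable F : finFieldType.
Hypothesis pchar3 : (3%N \in [pchar F])%R.
Variable eps : F.
Hypothesis eps_nsq : ~~ [exists y : F, y ^+ 2 == eps].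
Variable n : nat.
Local Notation m := n.-1.
Variable c : F.
Hypothesis c0 : c != 0.

Definition Bt (t : F) : 'M[F]_m :=
  \matrix_(i, j) (if (val i == 0%N) && (val j == 0%N) then t ^+ 2 else 0).
Definition ht (t : F) : 'M[F]_(2, m) :=
  \matrix_(i, j) (if (val i == 0%N) && (val j == 0%N) then t else 0).

Lemma Bt_ok t : (Bt t)^T + Bt t + (ht t)^T *m delta eps *m ht t == 0.
Proof.
apply/eqP/matrixP => i j; rewrite mxE mul2E mul2E mul2E !mxE /=.
rewrite !mulr0 ?mul0r !addr0 mulr1 andbC.
case: (val i == 0%N); case: (val j == 0%N) => /=; rewrite ?mulr0 ?mul0r ?addr0 //.
rewrite -expr2 -[t ^+ 2]mul1r -!mulrDl.
have -> : (1 + 1 + 1 : F) = 3%:R by rewrite !mulrS mulr0n addr0 addrA.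
by rewrite (pcharf0 pchar3) mul0r.
Qed.


Definition Ut (t : F) : 'M[F]_(m + m + 2) :=
  blk3 1%:M (Bt t) (- ((ht t)^T *m delta eps)) 0 1%:M 0 0 (ht t) 1%:M.

Lemma Ut_Q t : Ut t \in Qset eps n.
Proof. exact: Q_U (Bt_ok t). Qed.

Lemma trI r (hr : (r <= m)%N) (r0 : (0 < r)%N) :
  exists K, forall t, \tr (Ut t *m sigma n r) = K + t ^+ 2.
Proof.
set S1' := \sum_(j < m) (if (j < r)%N then 0 else (1%:M : 'M[F]_m) j j).
set S2 := \sum_(j < m) (if (j < r)%N then (0 : 'M[F]_m) j j else (1%:M : 'M[F]_m) j j).
exists (S1' + S2 + \tr (1%:M : 'M[F]_2)) => t.
rewrite /Ut tr_blk3_sigma //.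
have E1 : \sum_(j < m) (if (j < r)%N then Bt t j j else (1%:M : 'M[F]_m) j j) = t ^+ 2 + S1'.
  pose j0 : 'I_m := Ordinal (leq_trans r0 hr).
  rewrite (eq_bigr (fun j : 'I_m => (if val j == 0%N then t ^+ 2 else 0) +
     (if (j < r)%N then 0 else (1%:M : 'M[F]_m) j j))); last first.
    move=> j _; rewrite /Bt mxE andbb; case: ifP => hj.
      by rewrite addr0.
    have -> : (val j == 0%N) = false by apply/negbTE; apply: contraFneq hj => ->.
    by rewrite add0r.
  rewrite big_split /=; congr (_ + _).
  rewrite (bigD1 j0) //= big1 ?addr0 // => j hj.
  case: eqP => // e; case/eqP: hj; exact: val_inj.
by rewrite E1 -!addrA addrC !addrA.
Qed.

Lemma inQsQ x s : x \in Qset eps n -> x *m s \in QsQ eps n s.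
Proof.
move=> xQ; rewrite inE; apply/existsP; exists x; apply/existsP; exists 1%:M.
by rewrite xQ Q_1 mulmx1 eqxx.
Qed.

Lemma inrQsQ x s : x \in Qset eps n -> rho n *m x *m s \in rQsQ eps n s.
Proof.
move=> xQ; rewrite inE; apply/existsP; exists x; apply/existsP; exists 1%:M.
by rewrite xQ Q_1 mulmx1 eqxx.
Qed.

Lemma caseI (e : bool) r (hr : (r <= m)%N) (r0 : (0 < r)%N) :
  (forall g, g \in (if e then rQsQ eps n (sigma n r) else QsQ eps n (sigma n r)) ->
     abstr (c * \tr g) = 0) -> False.
Proof.
have [K HK] := @trI r hr r0.
case: e => H.
  apply: (@absurdI F pchar3 c (K - 1 *+ 2) c0) => t.
  have := H _ (@inrQsQ _ (sigma n r) (Ut_Q t)).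
  rewrite -mulmxA tr_rho HK /Ut blk3_sigma_lst // mxE /=.
  by rewrite addrAC.
apply: (@absurdI F pchar3 c K c0) => t.
by have := H _ (@inQsQ _ (sigma n r) (Ut_Q t)); rewrite HK.
Qed.

Definition bS (t : F) := (t + t) / (1 - eps * t ^+ 2).

Lemma aSbS t : aS F eps t ^+ 2 - eps * bS t ^+ 2 = 1.
Proof.
have d0 := @den_nz F eps eps_nsq t.
rewrite /aS /bS; set u := eps * t ^+ 2.
rewrite !expr_div_n [eps * (_ / _)]mulrA -mulrBl.
apply: (canLR (mulfK _)); first by rewrite expf_neq0.
rewrite mul1r.
have e2 (x : F) : x + x = x * (1 + 1) by rewrite mulrDr mulr1.
have key : (1 + u) ^+ 2 - (1 - u) ^+ 2 = eps * (t + t) ^+ 2.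
  rewrite subr_sqr opprB [1 + u + (u - 1)]addrC addrA subrK.
  rewrite addrACA subrr addr0 (e2 u) (e2 t) exprMn mulrA -/u.
  by rewrite -mulrA -expr2.
by rewrite -key opprB addrC subrK.
Qed.

Definition Dt (t : F) : 'M[F]_(m + m + 2) :=
  blk3 1%:M 0 0 0 (invmx 1%:M)^T 0 0 0 (iS F eps (aS F eps t) (bS t)).

Lemma Dt_Q t : Dt t \in Qset eps n.
Proof.
apply: (@Q_D F eps n 1%:M); first by rewrite unitmxE det1 unitr1.
exact: (@iS_SO2 F eps _ _ (aSbS t)).
Qed.

Lemma tr_iS a b : \tr (iS F eps a b) = a + a.
Proof. by rewrite /mxtrace big_ord_recl big_ord1 !mxE. Qed.

Lemma caseS : (forall g, g \in QsQ eps n (sigma n 0) -> abstr (c * \tr g) = 0) -> False.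
Proof.
move=> H.
pose K := \sum_(j < m) (if (j < 0)%N then (0 : 'M[F]_m) j j else (1%:M : 'M[F]_m) j j) +
  \sum_(j < m) (if (j < 0)%N then (0 : 'M[F]_m) j j else ((invmx (1%:M : 'M[F]_m))^T) j j).
apply: (@absurdS F pchar3 eps eps_nsq c K c0) => t.
have := H _ (@inQsQ _ (sigma n 0) (Dt_Q t)).
by rewrite /Dt tr_blk3_sigma // tr_iS.
Qed.

Definition Dr (a : F) : 'M[F]_(m + m + 2) :=
  blk3 a%:M 0 0 0 (invmx (a%:M : 'M[F]_m))^T 0 0 0 1%:M.

Lemma Dr_Q a : a != 0 -> Dr a \in Qset eps n.
Proof.
move=> a0; apply: (@Q_D F eps n a%:M).
  by rewrite unitmxE det_scalar unitfE expf_neq0.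
exact: (@SO2_1 F eps).
Qed.

Lemma caseR : (0 < m < 3)%N ->
  (forall g, g \in rQsQ eps n (sigma n 0) -> abstr (c * \tr g) = 0) -> False.
Proof.
move=> hm H.
have m0 : (m%:R : F) != 0.
  case/andP: hm; case: (m) => [//|[|[|//]]] _ _; first by rewrite oner_neq0.
  exact: (@two_nz F pchar3).
have cm0 : c * m%:R != 0 by rewrite mulf_neq0.
apply: (@absurdR F pchar3 (c * m%:R) 0 cm0) => a a0.
have := H _ (@inrQsQ _ (sigma n 0) (@Dr_Q a a0)).
rewrite -mulmxA tr_rho // /Dr tr_blk3_sigma // blk3_sigma_lst //.
have E0 (X Y : 'M[F]_m) : \sum_(j < m) (if (j < 0)%N then X j j else Y j j) = \tr Y.
  by apply: eq_bigr => j _.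
rewrite !(E0 0) mxtrace_tr.
have -> : invmx (a%:M : 'M[F]_m) = a^-1%:M by apply: invmx_scalar.
rewrite !mxtrace_scalar mxE /=.
by rewrite addrK -mulrnDl add0r -mulrA mulr_natl.
Qed.

End Main.

Theorem theorem14 (F : finFieldType) (pchar3 : (3%N \in [pchar F])%R)
  (eps : F) (eps_nz : eps != 0) (eps_nsq : ~~ [exists y : F, y ^+ 2 == eps])
  (n i : nat)
  (hcase : [|| [&& (i \in [:: 1; 2; 3]%N), ~~ odd n & (2 <= n)%N],
              [&& (i == 4)%N, ~~ odd n & (4 <= n)%N],
              [&& (i == 1)%N, odd n & (1 <= n)%N]
            | [&& (i \in [:: 2; 3; 4]%N), odd n & (3 <= n)%N]]) :
  injective (codeword eps n i).
Proof.
move=> a b /eq_in_map Hab.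
apply/eqP; rewrite -subr_eq0; apply/negPn/negP => c0.
have HD g : g \in DC eps n i -> abstr ((a - b) * \tr g) = 0.
  move=> gD; rewrite mulrBl (@abstrD F pchar3) (@abstrN F pchar3) (Hab g) ?mem_enum //.
  by rewrite subrr.
clear Hab; move: hcase HD; case: n => [|[|[|[|k]]]].
- by rewrite /= !andbF.
- move=> hc HD; have ei : i = 1%N.
    by clear HD; move: hc; rewrite !inE /=; case: i => [|[|[|[|[|?]]]]].
  subst i; exact: (@caseS F pchar3 eps eps_nsq 1 _ c0 HD).
- move=> hc HD; have : [|| (i == 1%N), (i == 2%N) | (i == 3%N)].
    by clear HD; move: hc; rewrite !inE /=; case: i => [|[|[|[|[|?]]]]].
  case/or3P => [/eqP ei|/eqP ei|/eqP ei]; subst i.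
  + exact: (@caseI F pchar3 eps 2 _ c0 false 1 isT isT HD).
  + exact: (@caseS F pchar3 eps eps_nsq 2 _ c0 HD).
  + exact: (@caseR F pchar3 eps 2 _ c0 isT HD).
- move=> hc HD; have : [|| (i == 1%N), (i == 2%N), (i == 3%N) | (i == 4%N)].
    by clear HD; move: hc; rewrite !inE /=; case: i => [|[|[|[|[|?]]]]].
  case/or4P => [/eqP ei|/eqP ei|/eqP ei|/eqP ei]; subst i.
  + exact: (@caseI F pchar3 eps 3 _ c0 false 2 isT isT HD).
  + exact: (@caseI F pchar3 eps 3 _ c0 false 1 isT isT HD).
  + exact: (@caseI F pchar3 eps 3 _ c0 true 1 isT isT HD).
  + exact: (@caseR F pchar3 eps 3 _ c0 isT HD).
- move=> hc HD; have : [|| (i == 1%N), (i == 2%N), (i == 3%N) | (i == 4%N)].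
    by clear HD; move: hc; rewrite !inE /=; case: i => [|[|[|[|[|?]]]]]; rewrite ?andbF.
  case/or4P => [/eqP ei|/eqP ei|/eqP ei|/eqP ei]; subst i.
  + exact: (@caseI F pchar3 eps k.+4 _ c0 false k.+3 (leqnn _) isT HD).
  + exact: (@caseI F pchar3 eps k.+4 _ c0 false k.+2 (leqW (leqnn _)) isT HD).
  + exact: (@caseI F pchar3 eps k.+4 _ c0 true k.+2 (leqW (leqnn _)) isT HD).
  + exact: (@caseI F pchar3 eps k.+4 _ c0 true k.+1 (leqW (leqW (leqnn _))) isT HD).
Qed.
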